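(* Consider a market with $n$ goods, supplies $w_1,\dots,w_n>0$ and demand functions $x_i:(0,\infty)^n\to(0,\infty)$ satisfying (fixed spending) $\sum_i p_ix_i(p)=M$ for all $p$, for a constant $M>0$, and (WGS) for all $j\ne i$, $x_j(p)$ is non-decreasing in $p_i$. Let $\phi_j(q)=q_j|x_j(q)-w_j|$. Fix $p$ and $i$ with $x_i(p)\ne w_i$, and let $p'=(p_{-i},p_i')$ differ from $p$ only in coordinate $i$, where $p_i'>p_i$ if $x_i(p)>w_i$ and $p_i'<p_i$ if $x_i(p)<w_i$, and where the change is same-side: $x_i(p')\ge w_i$ if $x_i(p)>w_i$, and $x_i(p')\le w_i$ if $x_i(p)<w_i$. Then \[ \phi_i(p)-\phi_i(p')\ \ge\ w_i|p_i'-p_i|+\sum_{j\ne i}\big|\phi_j(p)-\phi_j(p')\big|. \] In particular $\sum_j\phi_j(p)-\sum_j\phi_j(p')\ge w_i|p_i'-p_i|$.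
   Context: $(p_{-i},p_i')$ denotes the price vector $p$ with its $i$-th entry replaced by $p_i'$. *)

(* Defs.v *)
(* the statement is purely order-algebraic, stated over an
   arbitrary real field R (covers the reals). *)
From HB Require Import structures.
From mathcomp Require Import all_boot all_order all_algebra.
Set Implicit Arguments. Unset Strict Implicit. Unset Printing Implicit Defensive.
Import Order.TTheory GRing.Theory Num.Theory.
Local Open Scope ring_scope.

Definition posvec (R : realFieldType) (n : nat) (p : 'I_n -> R) : Prop :=
  forall k, 0 < p k.

Definition upd (R : realFieldType) (n : nat) (p : 'I_n -> R) (i : 'I_n) (a : R)
  : 'I_n -> R := fun j => if j == i then a else p j.

Definition phi (R : realFieldType) (n : nat) (x : ('I_n -> R) -> 'I_n -> R)
  (w : 'I_n -> R) (j : 'I_n) (q : 'I_n -> R) : R :=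
  q j * `|x q j - w j|.

(* Main.v *)
Require Import Defs.
From HB Require Import structures.
From mathcomp Require Import all_boot all_order all_algebra.
From Stdlib Require Import FunctionalExtensionality.
Import Order.TTheory GRing.Theory Num.Theory.
Local Open Scope ring_scope.

Lemma aux_t (R : realFieldType) (p x w a y : R) : p*(x - w) - a*(y - w) = w*(a-p) + (p*x - a*y).
Proof. rewrite !mulrBr opprB (mulrC p w) (mulrC a w).
rewrite -!addrA (addrCA (p*x)) (addrCA (p*x) (w*a)) (addrCA (- (w * p))) //. Qed.

Lemma aux_t2 (R : realFieldType) (p x w a y : R) : p*(w - x) - a*(w - y) = w*(p-a) - (p*x - a*y).
Proof. rewrite !mulrBr opprB opprB (mulrC p w) (mulrC a w).
rewrite -!addrA; congr (_ + _). rewrite (addrC (a*y)) (addrCA (- (p * x))); congr (_ + _); exact: addrC. Qed.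

Lemma aux_L (R : realFieldType) (p X Y w : R) : 0 < p ->
  `|p * `|X - w| - p * `|Y - w| | <= p * `|X - Y|.
Proof.
move=> hp; rewrite -mulrBr normrM gtr0_norm // ler_pM2l //.
have := ler_dist_dist (X - w) (Y - w).
by rewrite opprB addrA subrK.
Qed.

Lemma aux_E (R : realFieldType) (A B Sp Sq : R) : A + Sp = B + Sq -> Sq - Sp = A - B.
Proof.
move=> E; apply/eqP; rewrite subr_eq addrAC E (addrC B Sq) addrK //.
Qed.

Theorem mainTheorem6 (R : realFieldType) (n : nat)
  (w : 'I_n -> R) (M : R) (x : ('I_n -> R) -> 'I_n -> R)
  (hw : forall j, 0 < w j) (hM : 0 < M)
  (hxpos : forall q, posvec q -> forall j, 0 < x q j)
  (hspend : forall q, posvec q -> \sum_(k < n) q k * x q k = M)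
  (hWGS : forall (q : 'I_n -> R) (i j : 'I_n), posvec q -> j != i ->
     forall a b : R, 0 < a -> a <= b -> x (upd q i a) j <= x (upd q i b) j)
  (p : 'I_n -> R) (i : 'I_n) (a : R)
  (hp : posvec p) (ha : 0 < a) (hneq : x p i != w i)
  (hup : w i < x p i -> p i < a /\ w i <= x (upd p i a) i)
  (hdown : x p i < w i -> a < p i /\ x (upd p i a) i <= w i) :
  phi x w i p - phi x w i (upd p i a) >=
    w i * `|a - p i| + \sum_(j < n | j != i) `|phi x w j p - phi x w j (upd p i a)|
  /\
  \sum_(j < n) phi x w j p - \sum_(j < n) phi x w j (upd p i a) >= w i * `|a - p i|.
Proof.
have pp : upd p i (p i) = p.
  by apply: functional_extensionality => k; rewrite /upd; case: eqP => // ->.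
set q := upd p i a in hup hdown *.
have qi : q i = a by rewrite /q /upd eqxx.
have qj : forall j, j != i -> q j = p j by move=> j /negbTE; rewrite /q /upd => ->.
have hq : posvec q by move=> k; rewrite /q /upd; case: (k == i).
have key : \sum_(j < n | j != i) p j * (x q j - x p j) = p i * x p i - a * x q i.
  under eq_bigr => j _ do rewrite mulrBr.
  rewrite sumrB; apply: aux_E.
  have := hspend q hq; rewrite -(hspend p hp) (bigD1 i) //= [in RHS](bigD1 i) //= qi.
  move=> E; rewrite -E; congr (_ + _); apply: eq_bigr => j hj; by rewrite qj.
have first : w i * `|a - p i| + \sum_(j < n | j != i) `|phi x w j p - phi x w j q|
             <= phi x w i p - phi x w i q.
  rewrite /phi qi.
  case: (ltgtP (x p i) (w i)) hneq => // hlt _.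
  - have [hap hxq] := hdown hlt.
    rewrite (ltr0_norm (x := x p i - w i)) ?subr_lt0 // opprB.
    rewrite (ler0_norm (x := x q i - w i)) ?subr_le0 // opprB.
    rewrite (ltr0_norm (x := a - p i)) ?subr_lt0 // opprB.
    rewrite aux_t2 -key -sumrN lerD2l; apply: ler_sum => j hj.
    rewrite qj // -[X in _ <= X]mulrN opprB.
    have hm : x q j <= x p j.
      by have := hWGS p i j hp hj a (p i) ha (ltW hap); rewrite pp.
    apply: le_trans (@aux_L _ (p j) (x p j) (x q j) (w j) (hp j)) _.
    by rewrite ger0_norm // subr_ge0.
  - have [hap hxq] := hup hlt.
    rewrite (gtr0_norm (x := x p i - w i)) ?subr_gt0 //.
    rewrite (ger0_norm (x := x q i - w i)) ?subr_ge0 //.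
    rewrite (gtr0_norm (x := a - p i)) ?subr_gt0 //.
    rewrite aux_t -key lerD2l; apply: ler_sum => j hj.
    rewrite qj //.
    have hm : x p j <= x q j.
      by have := hWGS p i j hp hj (p i) a (hp i) (ltW hap); rewrite pp.
    apply: le_trans (@aux_L _ (p j) (x p j) (x q j) (w j) (hp j)) _.
    by rewrite distrC ger0_norm // subr_ge0.
split => //.
rewrite [X in _ <= X - _](bigD1 i) //= [X in _ <= _ - X](bigD1 i) //= opprD addrACA -sumrB.
apply: le_trans (lerD first (_ : - (\sum_(j < n | j != i) `|phi x w j p - phi x w j q|) <= _)).
  by rewrite addrK.
rewrite -sumrN; apply: ler_sum => j _; exact: lerNnormlW.
Qed.
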